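(* Let $A$ and $B$ be algebras such that the right $A$-module $A_A$ is idempotent and non-degenerate, let $s\colon B\to M(A)$ be a homomorphism and $t\colon B\to M(A)$ an anti-homomorphism with commuting images such that the $B$-modules ${}_BA$ and $A^B$ are faithful and idempotent. Assume moreover one of the following: (1) the right module $A_A$ has local units in $A$; (2) there exists a left separability multiplier $E\in M(B\otimes B^{\mathrm{op}})$; (3) the algebra $B$ is firm and the $B$-modules ${}_BA$ and $A^B$ are locally projective. Then ${}_BA\otimes A^B$ is non-degenerate as a right module over $A\otimes1$ and over $1\otimes A$.
   Context: All algebras are associative complex algebras, not necessarily unital. For an algebra $A$ with $A_A$ non-degenerate, $L(A)$ is the algebra of right $A$-module endomorphisms of $A$, containing $A$ via left multiplication, and $M(A)=\{T\in L(A): aT\in A\ \forall a\in A\}$. ${}_BA$ is $A$ as a left $B$-module via $x\cdot a=s(x)a$; $A^B$ is $A$ as a right $B$-module via $a\cdot x=t(x)a$; faithful and idempotent means $s$, $t$ injective and $s(B)A=A=t(B)A$. ${}_BA\otimes A^B$ is the quotient of $A\otimes A$ by the span of $s(x)a\otimes b-a\otimes t(x)b$; it is a right module over $A\otimes1$ and $1\otimes A$ by right multiplication in the respective factor; non-degenerate means: if $w(c\otimes1)=0$ for all $c\in A$ then $w=0$ (and likewise for $1\otimes c$). A module $M_D$ is non-degenerate if $mD=0$ implies $m=0$; $A_A$ has local units if for every finite $F\subseteq A$ there is $e\in A$ with $ae=a$ for all $a\in F$. Under the hypotheses $B$ is a non-degenerate algebra, so $M(B\otimes B^{\mathrm{op}})$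 makes sense. A left separability multiplier is $E\in M(B\otimes B^{\mathrm{op}})$ such that for all $x\in B$, $E(x\otimes1)=E(1\otimes x^{\mathrm{op}})\in B\otimes B^{\mathrm{op}}$ and the linear map $y\otimes z^{\mathrm{op}}\mapsto zy$ sends this element to $x$. An algebra $D$ is firm if multiplication $D\otimes_DD\to D$ is an isomorphism. A $D$-module $M$ is locally projective if for every finite $F\subseteq M$ there are finitely many module maps $\upsilon_i\colon M\to D$ and $m_i\colon D\to M$ with $\sum_im_i(\upsilon_i(m))=m$ for all $m\in F$. *)

(* Defs.v *)
From HB Require Import structures.
From mathcomp Require Import all_boot all_algebra.
From mathcomp Require Import Rstruct complex.
From mathcomp.multinomials Require Import freeg.

Set Implicit Arguments.
Unset Strict Implicit.
Unset Printing Implicit Defensive.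

Import GRing.Theory.
Local Open Scope ring_scope.

Definition Cx : fieldType := Rdefinitions.R[i].

Section Defs.
Variable K : fieldType.

Definition is_linear (U V : lmodType K) (f : U -> V) : Prop :=
  forall (k : K) (u v : U), f (k *: u + v) = k *: f u + f v.

Definition is_algebra (A : lmodType K) (mA : A -> A -> A) : Prop :=
  [/\ forall a b c, mA a (mA b c) = mA (mA a b) c,
      forall a, is_linear (mA a) & forall b, is_linear (fun a => mA a b)].

Definition right_idempotent (A : lmodType K) (mA : A -> A -> A) : Prop :=
  forall a : A, exists l : seq (A * A), a = \sum_(p <- l) mA p.1 p.2.

Definition right_nondegenerate (A : lmodType K) (mA : A -> A -> A) : Prop :=
  forall a : A, (forall c, mA a c = 0) -> a = 0.

Definition in_L (A : lmodType K) (mA : A -> A -> A) (T : A -> A) : Prop :=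
  is_linear T /\ forall a b, T (mA a b) = mA (T a) b.

(* T is an element of M(A): T in L(A) and aT in A for all a in A, where A sits
   in L(A) by left multiplication and the product of L(A) is composition. *)
Definition in_M (A : lmodType K) (mA : A -> A -> A) (T : A -> A) : Prop :=
  in_L mA T /\ forall a, exists a', forall b, mA a (T b) = mA a' b.

Definition mult_hom (B A : lmodType K) (mB : B -> B -> B) (mA : A -> A -> A)
    (s : B -> A -> A) : Prop :=
  [/\ forall x, in_M mA (s x),
      forall (k : K) x y a, s (k *: x + y) a = k *: s x a + s y a &
      forall x y a, s (mB x y) a = s x (s y a)].

Definition mult_antihom (B A : lmodType K) (mB : B -> B -> B) (mA : A -> A -> A)
    (t : B -> A -> A) : Prop :=
  [/\ forall x, in_M mA (t x),
      forall (k : K) x y a, t (k *: x + y) a = k *: t x a + t y a &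
      forall x y a, t (mB x y) a = t y (t x a)].

Definition faithful_idempotent (B A : lmodType K) (f : B -> A -> A) : Prop :=
  (forall x y, (forall a, f x a = f y a) -> x = y) /\
  (forall a : A, exists l : seq (B * A), a = \sum_(p <- l) f p.1 p.2).

Definition free (X : choiceType) := {freeg X / K}.

Definition in_span (V : lmodType K) (P : V -> Prop) (w : V) : Prop :=
  exists l : seq (K * V),
    (forall p, List.In p l -> P p.2) /\ w = \sum_(p <- l) p.1 *: p.2.

(* Relations defining X (x) Y = free(X x Y) / (bilinearity relations). *)
Definition bilin_rel (X Y : lmodType K) (w : free (X * Y)%type) : Prop :=
  [\/ exists x x' y, w = << (x + x', y) >> - << (x, y) >> - << (x', y) >>,
      exists x y y', w = << (x, y + y') >> - << (x, y) >> - << (x, y') >>,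
      exists k x y, w = << (k *: x, y) >> - k *: << (x, y) >>
    | exists k x y, w = << (x, k *: y) >> - k *: << (x, y) >> ].

(* Relations defining  _B A (x) A^B : bilinearity and
   s(x)a (x) b = a (x) t(x)b. *)
Definition bal_rel (B A : lmodType K) (s t : B -> A -> A)
    (w : free (A * A)%type) : Prop :=
  bilin_rel w \/ exists x a b, w = << (s x a, b) >> - << (a, t x b) >>.

Definition act_left (A : lmodType K) (mA : A -> A -> A) (c : A)
    (w : free (A * A)%type) : free (A * A)%type :=
  fglift (fun p : A * A => << (mA p.1 c, p.2) >> : free (A * A)%type) w.
Definition act_right (A : lmodType K) (mA : A -> A -> A) (c : A)
    (w : free (A * A)%type) : free (A * A)%type :=
  fglift (fun p : A * A => << (p.1, mA p.2 c) >> : free (A * A)%type) w.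

(* An element of the quotient is represented by w : free(A x A), and
   it is zero iff w lies in the span of the defining relations. *)
Definition tensor_nondegenerate (B A : lmodType K) (mA : A -> A -> A)
    (s t : B -> A -> A) : Prop :=
  (forall w, (forall c, in_span (bal_rel s t) (act_left mA c w)) ->
             in_span (bal_rel s t) w) /\
  (forall w, (forall c, in_span (bal_rel s t) (act_right mA c w)) ->
             in_span (bal_rel s t) w).

Definition right_local_units (A : lmodType K) (mA : A -> A -> A) : Prop :=
  forall F : seq A, exists e : A, forall a, a \in F -> mA a e = a.

(* B (x) B^op is represented by free(B x B) modulo the bilinearity relations;
   y (x) z^op is represented by << (y, z) >>. *)
Definition eqT (B : lmodType K) (w w' : free (B * B)%type) : Prop :=
  in_span (@bilin_rel B B) (w - w').

(* Multiplication of B (x) B^op: (y (x) z^op)(y' (x) z'^op) = yy' (x) (z'z)^op. *)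
Definition mulT (B : lmodType K) (mB : B -> B -> B)
    (w w' : free (B * B)%type) : free (B * B)%type :=
  fglift (fun p : B * B =>
    fglift (fun q : B * B => << (mB p.1 q.1, mB q.2 p.2) >> : free (B * B)%type)
      w') w.

(* Left multiplication by the multipliers x (x) 1 and 1 (x) x^op. *)
Definition lmul_x1 (B : lmodType K) (mB : B -> B -> B) (x : B)
    (w : free (B * B)%type) : free (B * B)%type :=
  fglift (fun q : B * B => << (mB x q.1, q.2) >> : free (B * B)%type) w.
Definition lmul_1x (B : lmodType K) (mB : B -> B -> B) (x : B)
    (w : free (B * B)%type) : free (B * B)%type :=
  fglift (fun q : B * B => << (q.1, mB q.2 x) >> : free (B * B)%type) w.

Definition mu_op (B : lmodType K) (mB : B -> B -> B)
    (w : free (B * B)%type) : B :=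
  fglift (fun q : B * B => mB q.2 q.1) w.

(* E is given by a
   linear map T on free(B x B) that preserves the bilinearity relations
   (i.e. a lift of the linear endomorphism E of B (x) B^op). *)
Definition left_separability_multiplier (B : lmodType K) (mB : B -> B -> B)
    (T : free (B * B)%type -> free (B * B)%type) : Prop :=
  [/\ is_linear T,
      forall w, in_span (@bilin_rel B B) w -> in_span (@bilin_rel B B) (T w),
      forall w w', eqT (T (mulT mB w w')) (mulT mB (T w) w'),
      forall d, exists d', forall e, eqT (mulT mB d (T e)) (mulT mB d' e) &
      (* E(x (x) 1) = E(1 (x) x^op) in B (x) B^op, mapped to x by mu_op *)
      forall x : B, exists d,
        [/\ forall e, eqT (T (lmul_x1 mB x e)) (mulT mB d e),
            forall e, eqT (T (lmul_1x mB x e)) (mulT mB d e) &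
            mu_op mB d = x]].

Definition mu (B : lmodType K) (mB : B -> B -> B)
    (w : free (B * B)%type) : B :=
  fglift (fun q : B * B => mB q.1 q.2) w.

Definition firm_rel (B : lmodType K) (mB : B -> B -> B)
    (w : free (B * B)%type) : Prop :=
  bilin_rel w \/ exists x y z, w = << (mB x y, z) >> - << (x, mB y z) >>.

Definition firm (B : lmodType K) (mB : B -> B -> B) : Prop :=
  (forall b : B, exists w, mu mB w = b) /\
  (forall w, mu mB w = 0 -> in_span (firm_rel mB) w).

(* Module maps for _B A (action x.a = s(x)a) and for A^B (a.x = t(x)a). *)
Definition left_locally_projective (B A : lmodType K) (mB : B -> B -> B)
    (s : B -> A -> A) : Prop :=
  forall F : seq A, exists l : seq ((A -> B) * (B -> A)),
    (forall p, List.In p l ->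
       [/\ is_linear p.1, is_linear p.2,
           forall x a, p.1 (s x a) = mB x (p.1 a) &
           forall x b, p.2 (mB x b) = s x (p.2 b)]) /\
    (forall a, a \in F -> \sum_(p <- l) p.2 (p.1 a) = a).

Definition right_locally_projective (B A : lmodType K) (mB : B -> B -> B)
    (t : B -> A -> A) : Prop :=
  forall F : seq A, exists l : seq ((A -> B) * (B -> A)),
    (forall p, List.In p l ->
       [/\ is_linear p.1, is_linear p.2,
           forall x a, p.1 (t x a) = mB (p.1 a) x &
           forall x b, p.2 (mB b x) = t x (p.2 b)]) /\
    (forall a, a \in F -> \sum_(p <- l) p.2 (p.1 a) = a).

End Defs.

(* Main.v *)
Require Import Defs.
From HB Require Import structures.
From mathcomp Require Import all_boot all_algebra.
From mathcomp Require Import Rstruct complex.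
From mathcomp.multinomials Require Import freeg.
From Stdlib Require Import ClassicalEpsilon.
Set Implicit Arguments.
Unset Strict Implicit.
Unset Printing Implicit Defensive.
Import GRing.Theory.
Local Open Scope ring_scope.


Section Free.
Variable K : fieldType.

Lemma lin0 (U V : lmodType K) (f : U -> V) : is_linear f -> f 0 = 0.
Proof.
move=> hf; have h := hf 1 0 0; rewrite !scale1r addr0 in h.
have := congr1 (fun x => x - f 0) h; rewrite /= subrr addrK.
by move=> <-.
Qed.
Lemma linD (U V : lmodType K) (f : U -> V) : is_linear f -> forall u v, f (u + v) = f u + f v.
Proof. by move=> hf u v; have := hf 1 u v; rewrite !scale1r. Qed.
Lemma linZ (U V : lmodType K) (f : U -> V) : is_linear f -> forall k u, f (k *: u) = k *: f u.
Proof. by move=> hf k u; rewrite -[k *: u]addr0 hf (lin0 hf) addr0. Qed.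
Lemma linN (U V : lmodType K) (f : U -> V) : is_linear f -> forall u, f (- u) = - f u.
Proof. by move=> hf u; rewrite -scaleN1r linZ // scaleN1r. Qed.
Lemma linB (U V : lmodType K) (f : U -> V) : is_linear f -> forall u v, f (u - v) = f u - f v.
Proof. by move=> hf u v; rewrite linD // linN. Qed.
Lemma lin_sum (U V : lmodType K) (f : U -> V) (I : Type) (r : seq I) (F : I -> U) :
  is_linear f -> f (\sum_(i <- r) F i) = \sum_(i <- r) f (F i).
Proof.
move=> hf; elim: r => [|i r IH]; first by rewrite !big_nil lin0.
by rewrite !big_cons linD // IH.
Qed.

Variable X : choiceType.
Local Notation F := {freeg X / K}.

HB.instance Definition _ (M : lmodType K) (f : X -> M) :=
  GRing.isAdditive.Build F M (fglift f) (lift_is_additive f).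

Lemma fgZU (c k : K) (x : X) : c *: << k *g x >> = << c * k *g x >> :> F.
Proof.
apply/eqP/freeg_eqP => z; rewrite coeffZ !coeffU mulrA //.
Qed.

Lemma fglift_lin (M : lmodType K) (f : X -> M) : is_linear (fglift f).
Proof.
move=> c D D'; rewrite raddfD /=; congr (_ + _).
elim/freeg_ind_dom0: D => [|k x D _ _ IH]; first by rewrite scaler0 raddf0 scaler0.
by rewrite scalerDr !raddfD /= IH fgZU !liftU scalerA.
Qed.

Lemma free_repr (D : F) : exists l : seq (K * X), D = \sum_(p <- l) p.1 *: << p.2 >>.
Proof.
elim/freeg_ind_dom0: D => [|k x D _ _ [l ->]]; first by exists [::]; rewrite big_nil.
by exists ((k, x) :: l); rewrite big_cons /= fgZU mulr1.
Qed.

Lemma fglift_sum (M : lmodType K) (f : X -> M) (l : seq (K * X)) :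
  fglift f (\sum_(p <- l) p.1 *: << p.2 >>) = \sum_(p <- l) p.1 *: f p.2.
Proof.
rewrite (lin_sum _ _ (fglift_lin f)); apply: eq_bigr => p _.
by rewrite (linZ (fglift_lin f)) liftU scale1r.
Qed.

Lemma fgliftU (M : lmodType K) (f : X -> M) x : fglift f << x >> = f x.
Proof. by rewrite liftU scale1r. Qed.

Lemma fglift_ext (M : lmodType K) (f g : X -> M) : f =1 g -> fglift f =1 fglift g.
Proof.
move=> e D; have [l ->] := free_repr D; rewrite !fglift_sum.
by apply: eq_bigr => p _; rewrite e.
Qed.

Lemma free_ind (P : F -> Prop) : P 0 -> (forall k x D, P D -> P (k *: << x >> + D)) ->
  forall D, P D.
Proof.
move=> H0 HS D; have [l ->] := free_repr D; elim: l => [|p l IH]; first by rewrite big_nil.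
by rewrite big_cons; apply: HS.
Qed.

End Free.

Lemma fglift_comp (K : fieldType) (X Y : choiceType) (M : lmodType K) (f : X -> {freeg Y / K})
  (g : Y -> M) (D : {freeg X / K}) :
  fglift g (fglift f D) = fglift (fun x => fglift g (f x)) D.
Proof.
have [l ->] := free_repr D; rewrite !fglift_sum (lin_sum _ _ (fglift_lin g)).
by apply: eq_bigr => p _; rewrite (linZ (fglift_lin g)).
Qed.

Section Span.
Variable K : fieldType.
Variable V : lmodType K.
Implicit Types P Q : V -> Prop.

Lemma span_gen P v : P v -> in_span P v.
Proof.
move=> Pv; exists [:: (1, v)]; split; last by rewrite big_seq1 scale1r.
by move=> p [e|[]]; rewrite -e.
Qed.

Lemma span0 P : in_span P 0.
Proof. by exists [::]; split=> // ; rewrite big_nil. Qed.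

Lemma spanD P v w : in_span P v -> in_span P w -> in_span P (v + w).
Proof.
move=> [l [Hl ->]] [l' [Hl' ->]]; exists (l ++ l'); split; last by rewrite big_cat.
move=> p hp; case: (List.in_app_or _ _ _ hp) => ?; [exact: Hl | exact: Hl'].
Qed.

Lemma spanZ P k v : in_span P v -> in_span P (k *: v).
Proof.
move=> [l [Hl ->]]; exists [seq (k * p.1, p.2) | p <- l]; split.
  move=> p hp; have [q [e Hq]] := proj1 (List.in_map_iff _ _ _) hp; rewrite -e; exact: (Hl _ Hq).
rewrite big_map scaler_sumr; apply: eq_bigr => p _; by rewrite scalerA.
Qed.

Lemma spanN P v : in_span P v -> in_span P (- v).
Proof. by move=> h; rewrite -scaleN1r; apply: spanZ. Qed.

Lemma spanB P v w : in_span P v -> in_span P w -> in_span P (v - w).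
Proof. by move=> h1 h2; apply: spanD => //; apply: spanN. Qed.

Lemma spanZD P k v w : in_span P v -> in_span P w -> in_span P (k *: v + w).
Proof. by move=> h1 h2; apply: spanD => //; apply: spanZ. Qed.

Lemma span_sum P (I : Type) (r : seq I) (G : I -> V) :
  (forall i, List.In i r -> in_span P (G i)) -> in_span P (\sum_(i <- r) G i).
Proof.
elim: r => [|i r IH] H; first by rewrite big_nil; apply: span0.
rewrite big_cons; apply: spanD; first by apply: H; left.
by apply: IH => j hj; apply: H; right.
Qed.

Lemma span_ind P (Q : V -> Prop) : Q 0 -> (forall k v w, P v -> Q w -> Q (k *: v + w)) ->
  forall w, in_span P w -> Q w.
Proof.
move=> H0 HS w [l [Hl ->]]; elim: l Hl => [|p l IH] Hl; first by rewrite big_nil.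
by rewrite big_cons; apply: HS; [apply: Hl; left | apply: IH => q hq; apply: Hl; right].
Qed.

Lemma span_span P w : in_span (in_span P) w -> in_span P w.
Proof. by apply: span_ind; [apply: span0 | move=> k v w' h1 h2; apply: spanZD]. Qed.

Lemma span_mono P Q w : (forall v, P v -> in_span Q v) -> in_span P w -> in_span Q w.
Proof. by move=> h; apply: span_ind; [apply: span0 | move=> k v w' h1 h2; apply: spanZD => //; apply: h]. Qed.

End Span.

Lemma span_map (K : fieldType) (V W : lmodType K) (P : V -> Prop) (Q : W -> Prop) (f : V -> W) w : is_linear f ->
  (forall v, P v -> in_span Q (f v)) -> in_span P w -> in_span Q (f w).
Proof.
move=> hf h; apply: (@span_ind _ _ P (fun w => in_span Q (f w))); first by rewrite (lin0 hf); apply: span0.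
by move=> k v w' h1 h2; rewrite hf; apply: spanZD => //; apply: h.
Qed.



Definition eqm (K : fieldType) (V : lmodType K) (P : V -> Prop) (u v : V) := in_span P (u - v).

Section Eqm.
Variables (K : fieldType) (V : lmodType K) (P : V -> Prop).
Local Notation "u === v" := (eqm P u v) (at level 70).

Lemma eqm_refl u : u === u.
Proof. by rewrite /eqm subrr; apply: span0. Qed.
Lemma eqm_sym u v : u === v -> v === u.
Proof. by rewrite /eqm => h; rewrite -opprB; apply: spanN. Qed.
Lemma eqm_trans u v w : u === v -> v === w -> u === w.
Proof. by rewrite /eqm => h1 h2; have := spanD h1 h2; rewrite addrA subrK. Qed.
Lemma eqm_add u v u' v' : u === v -> u' === v' -> u + u' === v + v'.
Proof. by rewrite /eqm => h1 h2; have := spanD h1 h2; rewrite opprD addrACA. Qed.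
Lemma eqm_scale k u v : u === v -> k *: u === k *: v.
Proof. by rewrite /eqm => h; have := spanZ k h; rewrite scalerBr. Qed.
Lemma eqm_opp u v : u === v -> - u === - v.
Proof. by move=> h; rewrite -!scaleN1r; apply: eqm_scale. Qed.
Lemma eqm_sub u v u' v' : u === v -> u' === v' -> u - u' === v - v'.
Proof. by move=> h1 h2; apply: eqm_add => //; apply: eqm_opp. Qed.
Lemma eqm_sum (I : Type) (r : seq I) (G G' : I -> V) :
  (forall i, List.In i r -> G i === G' i) -> \sum_(i <- r) G i === \sum_(i <- r) G' i.
Proof.
elim: r => [|i r IH] h; first by rewrite !big_nil; apply: eqm_refl.
rewrite !big_cons; apply: eqm_add; first by apply: h; left.
by apply: IH => j hj; apply: h; right.
Qed.
Lemma eqm0 u : u === 0 <-> in_span P u.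
Proof. by rewrite /eqm subr0. Qed.
Lemma eqm_span u v : u === v -> in_span P v -> in_span P u.
Proof. by rewrite /eqm => h1 h2; have := spanD h1 h2; rewrite subrK. Qed.
Lemma eqm_gen u v : P (u - v) -> u === v.
Proof. by move=> h; apply: span_gen. Qed.
End Eqm.

Lemma eqm_map (K : fieldType) (V W : lmodType K) (P : V -> Prop) (Q : W -> Prop) (f : V -> W) u v :
  is_linear f -> (forall x, P x -> in_span Q (f x)) -> eqm P u v -> eqm Q (f u) (f v).
Proof. by move=> hf h e; rewrite /eqm -(linB hf); apply: span_map e. Qed.

Lemma eqm_mono (K : fieldType) (V : lmodType K) (P Q : V -> Prop) u v :
  (forall x, P x -> in_span Q x) -> eqm P u v -> eqm Q u v.
Proof. by move=> h e; apply: span_mono e. Qed.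

Lemma fglift_post (K : fieldType) (X : choiceType) (M N : lmodType K) (f : X -> M) (g : M -> N) D :
  is_linear g -> g (fglift f D) = fglift (fun x => g (f x)) D.
Proof.
move=> hg; have [l ->] := free_repr D; rewrite !fglift_sum (lin_sum _ _ hg).
by apply: eq_bigr => p _; rewrite (linZ hg).
Qed.

Section Tens.
Variables (K : fieldType) (A B : lmodType K).
Local Notation FA := {freeg (A * B)%type / K}.
Local Notation bl := (@bilin_rel K A B).
Local Notation "u === v" := (eqm bl u v) (at level 70).

Lemma bl_D1 x x' y : << (x + x', y) >> === << (x, y) >> + << (x', y) >>.
Proof. by apply: eqm_gen; rewrite opprD addrA; constructor 1; exists x, x', y. Qed.
Lemma bl_D2 x y y' : << (x, y + y') >> === << (x, y) >> + << (x, y') >>.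
Proof. by apply: eqm_gen; rewrite opprD addrA; constructor 2; exists x, y, y'. Qed.
Lemma bl_Z1 k x y : << (k *: x, y) >> === k *: << (x, y) >>.
Proof. by apply: eqm_gen; constructor 3; exists k, x, y. Qed.
Lemma bl_Z2 k x y : << (x, k *: y) >> === k *: << (x, y) >>.
Proof. by apply: eqm_gen; constructor 4; exists k, x, y. Qed.
Lemma bl_01 y : << ((0 : A), y) >> === 0.
Proof.
have := bl_Z1 0 0 y; rewrite scaler0 scale0r //.
Qed.
Lemma bl_02 x : << (x, (0 : B)) >> === 0.
Proof. by have := bl_Z2 0 x 0; rewrite scaler0 scale0r. Qed.
Lemma bl_sum1 (I : Type) (r : seq I) (G : I -> A) y :
  << (\sum_(i <- r) G i, y) >> === \sum_(i <- r) << (G i, y) >>.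
Proof.
elim: r => [|i r IH]; first by rewrite !big_nil; apply: bl_01.
rewrite !big_cons; apply: eqm_trans (bl_D1 _ _ _) _; apply: eqm_add => //; apply: eqm_refl.
Qed.
Lemma bl_sum2 (I : Type) (r : seq I) x (G : I -> B) :
  << (x, \sum_(i <- r) G i) >> === \sum_(i <- r) << (x, G i) >>.
Proof.
elim: r => [|i r IH]; first by rewrite !big_nil; apply: bl_02.
rewrite !big_cons; apply: eqm_trans (bl_D2 _ _ _) _; apply: eqm_add => //; apply: eqm_refl.
Qed.
Lemma bl_sumZ1 (I : Type) (r : seq I) (c : I -> K) (G : I -> A) y :
  << (\sum_(i <- r) c i *: G i, y) >> === \sum_(i <- r) c i *: << (G i, y) >>.
Proof.
apply: eqm_trans (bl_sum1 _ _ _) _; apply: eqm_sum => i _; apply: bl_Z1.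
Qed.
Lemma bl_sumZ2 (I : Type) (r : seq I) x (c : I -> K) (G : I -> B) :
  << (x, \sum_(i <- r) c i *: G i) >> === \sum_(i <- r) c i *: << (x, G i) >>.
Proof.
apply: eqm_trans (bl_sum2 _ _ _) _; apply: eqm_sum => i _; apply: bl_Z2.
Qed.
Lemma bl_lin1 k x x' y : << (k *: x + x', y) >> === k *: << (x, y) >> + << (x', y) >>.
Proof.
apply: eqm_trans (bl_D1 _ _ _) _; apply: eqm_add; [apply: bl_Z1|apply: eqm_refl].
Qed.
Lemma bl_lin2 k x y y' : << (x, k *: y + y') >> === k *: << (x, y) >> + << (x, y') >>.
Proof.
apply: eqm_trans (bl_D2 _ _ _) _; apply: eqm_add; [apply: bl_Z2|apply: eqm_refl].
Qed.

Lemma bl_kill (W : lmodType K) (Q : W -> Prop) (g : A -> B -> W) :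
  (forall x x' y, eqm Q (g (x + x') y) (g x y + g x' y)) ->
  (forall x y y', eqm Q (g x (y + y')) (g x y + g x y')) ->
  (forall k x y, eqm Q (g (k *: x) y) (k *: g x y)) ->
  (forall k x y, eqm Q (g x (k *: y)) (k *: g x y)) ->
  forall w, bl w -> in_span Q (fglift (fun p => g p.1 p.2) w).
Proof.
have L := fglift_lin (fun p : A * B => g p.1 p.2).
move=> h1 h2 h3 h4 w [[x [x' [y ->]]]|[x [y [y' ->]]]|[k [x [y ->]]]|[k [x [y ->]]]];
  rewrite ?(linB L) ?(linZ L) !fgliftU /=.
- by have := h1 x x' y; rewrite /eqm opprD addrA.
- by have := h2 x y y'; rewrite /eqm opprD addrA.
- exact: h3.
- exact: h4.
Qed.
End Tens.

Lemma eqm_eq (K : fieldType) (V : lmodType K) (P : V -> Prop) u v : u = v -> eqm P u v.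
Proof. by move=> ->; apply: eqm_refl. Qed.

Lemma fglift_sumG (K : fieldType) (X : choiceType) (M : lmodType K) (f : X -> M) (I : Type)
  (r : seq I) (c : I -> K) (G : I -> X) :
  fglift f (\sum_(i <- r) c i *: << G i >>) = \sum_(i <- r) c i *: f (G i).
Proof.
rewrite (lin_sum _ _ (fglift_lin f)); apply: eq_bigr => i _.
by rewrite (linZ (fglift_lin f)) fgliftU.
Qed.

Lemma kill0 (K : fieldType) (V W : lmodType K) (P : V -> Prop) (f : V -> W) w :
  is_linear f -> (forall v, P v -> f v = 0) -> in_span P w -> f w = 0.
Proof.
move=> hf h; apply: (@span_ind _ _ P (fun w => f w = 0)); first exact: lin0.
by move=> k v w' h1 h2; rewrite hf h // h2 scaler0 addr0.
Qed.

Lemma span_eq0 (K : fieldType) (V : lmodType K) (w : V) : in_span (fun x => x = 0) w -> w = 0.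
Proof.
by apply: (@span_ind _ _ _ (fun w => w = 0)) => // k v w' -> ->; rewrite scaler0 addr0.
Qed.

Lemma bl_kill0 (K : fieldType) (A B W : lmodType K) (g : A -> B -> W) :
  (forall x x' y, g (x + x') y = g x y + g x' y) ->
  (forall x y y', g x (y + y') = g x y + g x y') ->
  (forall k x y, g (k *: x) y = k *: g x y) ->
  (forall k x y, g x (k *: y) = k *: g x y) ->
  forall w, bilin_rel w -> fglift (fun p => g p.1 p.2) w = 0.
Proof.
move=> h1 h2 h3 h4 w hw; apply: span_eq0.
by apply: (bl_kill (Q := fun x => x = 0)) hw => *; apply: eqm_eq.
Qed.


Section LA.
Variables (K : fieldType) (V : lmodType K).
Implicit Types (b g : seq V) (y : V).

Definition lc (l : nat -> K) b := \sum_(i < size b) l i *: b`_i.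
Definition indep b := forall l, lc l b = 0 -> forall i, (i < size b)%N -> l i = 0.
Definition inspan b y := exists l, y = lc l b.
Definition lin_on (S : V -> Prop) (f : V -> K) :=
  forall k y y', S y -> S y' -> f (k *: y + y') = k * f y + f y'.

Lemma lc_lin b k l l' : lc (fun i => k * l i + l' i) b = k *: lc l b + lc l' b.
Proof.
rewrite /lc scaler_sumr -big_split; apply: eq_bigr => i _.
by rewrite scalerDl scalerA.
Qed.

Lemma lc_rcons l b y : lc l (rcons b y) = lc l b + l (size b) *: y.
Proof.
rewrite /lc size_rcons big_ord_recr /= nth_rcons ltnn eqxx; congr (_ + _).
by apply: eq_bigr => i _; rewrite nth_rcons ltn_ord.
Qed.

Lemma lc_cat l b g : lc l (b ++ g) = lc l b + lc (fun i => l (size b + i)%N) g.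
Proof.
rewrite /lc size_cat big_split_ord /=; congr (_ + _); apply: eq_bigr => i _.
  by rewrite nth_cat ltn_ord.
by rewrite nth_cat ltnNge leq_addr /= addKn.
Qed.

Lemma lc_delta b i : (i < size b)%N -> lc (fun j => (j == i)%:R) b = b`_i.
Proof.
move=> hi; rewrite /lc (bigD1 (Ordinal hi)) //= eqxx scale1r big1 ?addr0 //.
move=> j /negbTE hj; suff -> : (j == i :> nat) = false by rewrite scale0r.
by apply/negbTE; apply: contraFneq hj => e; apply/eqP/val_inj.
Qed.

Lemma lc_sub b l l' : lc (fun i => l i - l' i) b = lc l b - lc l' b.
Proof.
rewrite /lc -sumrB; apply: eq_bigr => i _; by rewrite scalerBl.
Qed.

Lemma indep_uniq b l l' : indep b -> lc l b = lc l' b -> forall i, (i < size b)%N -> l i = l' i.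
Proof.
move=> hb e i hi; apply/eqP; rewrite -subr_eq0; apply/eqP.
by apply: (hb (fun i => l i - l' i)) => //; rewrite lc_sub e subrr.
Qed.

Lemma indep_rcons b y : indep b -> ~ inspan b y -> indep (rcons b y).
Proof.
move=> hb hy l; rewrite lc_rcons => e.
have ln : l (size b) = 0.
  apply/eqP; apply/negP => /negP nz; apply: hy.
  exists (fun i => - l i / l (size b)).
  apply: (scalerI nz); rewrite /lc scaler_sumr.
  have -> : l (size b) *: y = - lc l b by apply/eqP; rewrite -addr_eq0 addrC e.
  rewrite /lc -sumrN; apply: eq_bigr => i _.
  by rewrite scalerA mulrCA mulfV // mulr1 scaleNr.
move=> i; rewrite size_rcons ltnS leq_eqVlt => /orP [/eqP -> //|hi].
by apply: (hb l) => //; move: e; rewrite ln scale0r addr0.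
Qed.

Lemma inspan_nth b i : (i < size b)%N -> inspan b b`_i.
Proof. by move=> hi; exists (fun j => (j == i)%:R); rewrite lc_delta. Qed.

Lemma inspan_lin b k y y' : inspan b y -> inspan b y' -> inspan b (k *: y + y').
Proof. by move=> [l ->] [l' ->]; exists (fun i => k * l i + l' i); rewrite lc_lin. Qed.

Lemma inspan0 b : inspan b 0.
Proof. by exists (fun => 0); rewrite /lc; symmetry; apply: big1 => i _; rewrite scale0r. Qed.

Lemma inspan_catl b g y : inspan b y -> inspan (b ++ g) y.
Proof.
move=> [l ->]; exists (fun i => if (i < size b)%N then l i else 0).
rewrite lc_cat; rewrite [X in _ + X]big1 ?addr0; last first.
  by move=> i _; rewrite ltnNge leq_addr /= scale0r.
by apply: eq_bigr => i _; rewrite ltn_ord.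
Qed.

Lemma inspan_catr b g y : inspan g y -> inspan (b ++ g) y.
Proof.
move=> [l ->]; exists (fun i => if (i < size b)%N then 0 else l (i - size b)%N).
rewrite lc_cat [lc _ b]/lc big1 ?add0r; last by move=> i _; rewrite ltn_ord scale0r.
by apply: eq_bigr => i _; rewrite ltnNge leq_addr /= addKn.
Qed.

Lemma inspan_sub b g y : inspan b y -> (forall i, (i < size b)%N -> inspan g b`_i) -> inspan g y.
Proof.
move=> [l ->] h; rewrite /lc; elim/big_rec: _ => [|i x _ hx]; first exact: inspan0.
by apply: inspan_lin => //; apply: h.
Qed.

Lemma inspan_rcons b h y : inspan b y -> inspan (rcons b h) y.
Proof. by rewrite -cats1; apply: inspan_catl. Qed.

Lemma extend b H : indep b -> exists d, indep (b ++ d) /\ forall y, inspan (b ++ H) y -> inspan (b ++ d) y.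
Proof.
elim/last_ind: H => [|H h IH] hb.
  by exists [::]; split; rewrite cats0.
have [d [hd hs]] := IH hb.
have hs' : forall i, (i < size (b ++ H))%N -> inspan (b ++ d) (b ++ H)`_i.
  by move=> i hi; apply: hs; apply: inspan_nth.
have [hin|hout] := classic (inspan (b ++ d) h).
  exists d; split => // y hy; apply: (inspan_sub (g := b ++ d) hy) => i; rewrite -rcons_cat size_rcons => hi.
  rewrite nth_rcons; case: ltnP => h1; first exact: hs'.
  by rewrite (_ : i == size (b ++ H)) //; rewrite eqn_leq h1 -ltnS hi.
exists (rcons d h); split; first by rewrite -rcons_cat; apply: indep_rcons.
move=> y hy; apply: (inspan_sub (g := b ++ rcons d h) hy) => i; rewrite -rcons_cat size_rcons => hi.
rewrite -rcons_cat nth_rcons; case: ltnP => h1; first by apply: inspan_rcons; apply: hs'.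
rewrite (_ : i == size (b ++ H)); last by rewrite eqn_leq h1 -ltnS hi.
have := @inspan_nth (rcons (b ++ d) h) (size (b ++ d)).
by rewrite size_rcons ltnSn nth_rcons ltnn eqxx; apply.
Qed.

Definition coordl g y : nat -> K :=
  match excluded_middle_informative (inspan g y) with
  | left h => proj1_sig (constructive_indefinite_description _ h)
  | right _ => fun _ => 0
  end.

Lemma coordl_spec g y : inspan g y -> y = lc (coordl g y) g.
Proof.
rewrite /coordl; case: excluded_middle_informative => // h _.
by case: constructive_indefinite_description.
Qed.

Lemma coordl_eq g l y : indep g -> y = lc l g -> forall i, (i < size g)%N -> coordl g y i = l i.
Proof.
move=> hg e; apply: indep_uniq => //; rewrite -e -coordl_spec //; by exists l.
Qed.

Lemma coord_lin g i : indep g -> (i < size g)%N -> lin_on (inspan g) (fun y => coordl g y i).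
Proof.
move=> hg hi k y y' hy hy'.
rewrite (coordl_eq (l := fun j => k * coordl g y j + coordl g y' j)) //.
by rewrite lc_lin -!coordl_spec.
Qed.

Lemma exist_dual b H i0 : indep b -> (i0 < size b)%N ->
  exists f, lin_on (inspan (b ++ H)) f /\ forall i, (i < size b)%N -> f b`_i = (i == i0)%:R.
Proof.
move=> hb hi0; have [d [hd hs]] := extend H hb.
exists (fun y => coordl (b ++ d) y i0); split.
  move=> k y y' hy hy'; apply: coord_lin => //; rewrite ?size_cat ?ltn_addr //; exact: hs.
move=> i hi; rewrite (coordl_eq (l := fun j => (j == i)%:R)) ?size_cat ?ltn_addr ?(eq_sym i0) //.
by rewrite lc_delta ?nth_cat ?hi // size_cat ltn_addr.
Qed.

End LA.


Lemma fglift_sumU (K : fieldType) (X : choiceType) (M : lmodType K) (f : X -> M) (I : Type)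
  (r : seq I) (G : I -> X) :
  fglift f (\sum_(i <- r) << G i >>) = \sum_(i <- r) f (G i).
Proof.
rewrite (lin_sum _ _ (fglift_lin f)); apply: eq_bigr => i _; by rewrite fgliftU.
Qed.

Section ORD.
Variables (K : fieldType) (A : lmodType K).
Local Notation FA := {freeg (A * A)%type / K}.
Local Notation bl := (@bilin_rel K A A).
Local Notation "u =o v" := (eqm bl u v) (at level 70).

Definition Phi (f : A -> K) (w : FA) : A := fglift (fun p : A * A => f p.2 *: p.1) w.

Lemma red (l : seq (K * (A * A))) : exists al be : seq A, size al = size be /\ indep be /\
  \sum_(p <- l) p.1 *: << p.2 >> =o \sum_(i < size be) << (al`_i, be`_i) >>.
Proof.
elim: l => [|[k [a b]] l [al [be [hs [hi he]]]]].
  exists [::], [::]; split => //; split; first by move=> l _ i.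
  by rewrite big_nil big_ord0; apply: eqm_refl.
rewrite big_cons /=.
have [[lam hb]|hout] := classic (inspan be b).
  exists (mkseq (fun i => al`_i + (k * lam i) *: a) (size be)), be; split; first by rewrite size_mkseq.
  split=> //; apply: eqm_trans (eqm_add (eqm_refl _ _) he) _.
  rewrite hb /lc.
  have E := bl_sumZ2 (B := A) (index_enum 'I_(size be)) a (fun i : 'I_(size be) => lam i) (fun i => be`_i).
  have E2 := eqm_add (eqm_scale k E) (eqm_refl bl (\sum_(i < size be) <<(al`_i, be`_i)>>)).
  apply: (eqm_trans E2).
  rewrite scaler_sumr -big_split /=; apply: eqm_sum => i _.
  rewrite nth_mkseq //; apply: eqm_sym; apply: eqm_trans (bl_D1 _ _ _) _.
  rewrite [X in eqm _ _ X]addrC; apply: eqm_add; first exact: eqm_refl.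
  rewrite scalerA; exact: bl_Z1.
exists (rcons al (k *: a)), (rcons be b); split; first by rewrite !size_rcons hs.
split; first exact: indep_rcons.
rewrite size_rcons big_ord_recr /= [X in eqm _ X _]addrC; apply: eqm_add.
  apply: eqm_trans he _; apply: eqm_eq; apply: eq_bigr => i _.
  by rewrite !nth_rcons hs ltn_ord.
by rewrite !nth_rcons hs ltnn eqxx; apply: eqm_sym; apply: bl_Z1.
Qed.

Lemma lin_on0 (S : A -> Prop) f : S 0 -> lin_on S f -> f 0 = 0.
Proof.
move=> h0 hf; have := hf 1 0 0 h0 h0; rewrite scale1r addr0 mul1r.
by move=> /(congr1 (fun x => x - f 0)); rewrite subrr addrK => <-.
Qed.

Lemma rel_H (W : seq (K * FA)) : (forall q, List.In q W -> bl q.2) ->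
  exists H : seq A, forall f, lin_on (inspan H) f -> Phi f (\sum_(q <- W) q.1 *: q.2) = 0.
Proof.
elim: W => [|q W IH] hW.
  by exists [::] => f _; rewrite big_nil /Phi (lin0 (fglift_lin _)).
have [H hH] := IH (fun q' h => hW q' (or_intror h)).
have hq := hW q (or_introl erefl).
suff [H1 hH1] : exists H1 : seq A, forall f, lin_on (inspan H1) f -> Phi f q.2 = 0.
  exists (H1 ++ H) => f hf; rewrite big_cons /Phi (fglift_lin _) -!/(Phi f _) hH.
    rewrite hH1 ?scaler0 ?addr0 // => k y y' hy hy'; apply: hf; exact: inspan_catl.
  by move=> k y y' hy hy'; apply: hf; apply: inspan_catr.
case: hq => [[x [x' [y ->]]]|[x [y [y' ->]]]|[k [x [y ->]]]|[k [x [y ->]]]].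
- exists [::] => f _; rewrite /Phi !(linB (fglift_lin _)) !fgliftU /=.
  by rewrite scalerDr addrAC addrK subrr.
- exists [:: y; y'] => f hf; rewrite /Phi !(linB (fglift_lin _)) !fgliftU /=.
  have := hf 1 y y'; rewrite scale1r mul1r => ->.
  + by rewrite scalerDl addrAC addrK subrr.
  + by apply: (inspan_nth (b := [:: y; y']) (i := 0)).
  + by apply: (inspan_nth (b := [:: y; y']) (i := 1)).
- exists [::] => f _; rewrite /Phi !(linB (fglift_lin _)) (linZ (fglift_lin _)) !fgliftU /=.
  by rewrite scalerA mulrC -scalerA subrr.
- exists [:: y] => f hf; rewrite /Phi !(linB (fglift_lin _)) (linZ (fglift_lin _)) !fgliftU /=.
  have h0 : inspan [:: y] 0 by apply: inspan0.
  have := hf k y 0 (inspan_nth (b := [:: y]) (i := 0) erefl) h0.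
  by rewrite addr0 (lin_on0 h0 hf) addr0 => ->; rewrite scalerA subrr.
Qed.

Variable mA : A -> A -> A.
Hypothesis mA_linl : forall c, is_linear (fun a => mA a c).
Hypothesis hnd : right_nondegenerate mA.

Lemma act_left_bl c w : bl w -> in_span bl (act_left mA c w).
Proof.
apply: (bl_kill (g := fun x y => << (mA x c, y) >>)) => *.
- by rewrite (linD (mA_linl c)); apply: bl_D1.
- exact: bl_D2.
- by rewrite (linZ (mA_linl c)); apply: bl_Z1.
- exact: bl_Z2.
Qed.

Definition swp (w : FA) : FA := fglift (fun p : A * A => << (p.2, p.1) >>) w.

Lemma swp_bl w : bl w -> in_span bl (swp w).
Proof.
apply: (bl_kill (g := fun x y => << (y, x) >>)) => *.
- exact: bl_D2.
- exact: bl_D1.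
- exact: bl_Z2.
- exact: bl_Z1.
Qed.

Lemma swpK w : swp (swp w) = w.
Proof.
have [l ->] := free_repr w; rewrite /swp fglift_sum fglift_sumG.
by apply: eq_bigr => p _; case: p => k [].
Qed.

Lemma swp_act c w : swp (act_right mA c w) = act_left mA c (swp w).
Proof.
have [l ->] := free_repr w; rewrite /swp /act_right /act_left !fglift_sum !fglift_sumG.
by apply: eq_bigr => p _.
Qed.

Lemma ord_left w : (forall c, in_span bl (act_left mA c w)) -> in_span bl w.
Proof.
move=> hw; have [l El] := free_repr w; have [al [be [hs [hi he]]]] := red l.
suff z : forall i, (i < size be)%N -> al`_i = 0.
  rewrite El; apply: (eqm_span he).
  apply: span_sum => i _; rewrite z //; apply/eqm0; exact: bl_01.
move=> i0 hi0; apply: hnd => c.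
have hc : in_span bl (act_left mA c (\sum_(i < size be) << (al`_i, be`_i) >>)).
  apply: eqm_span (hw c); apply: eqm_map; first exact: fglift_lin.
    exact: act_left_bl.
  by rewrite El; apply: eqm_sym.
move: hc => [W [hW E]]; have [H hH] := rel_H hW.
have [f [hf hfb]] := exist_dual H hi hi0.
have := hH f (fun k y y' h1 h2 => hf k y y' (inspan_catr _ h1) (inspan_catr _ h2)).
rewrite -E /act_left fglift_sumU /Phi fglift_sumU /= => ee; apply: (etrans _ ee).
rewrite (bigD1 (Ordinal hi0)) //= hfb // eqxx scale1r big1 ?addr0 // => j hj.
rewrite hfb ?ltn_ord //; suff -> : (nat_of_ord j == i0) = false by rewrite scale0r.
by apply/negbTE; apply: contra hj => /eqP e; apply/eqP/val_inj.
Qed.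

Lemma ord_right w : (forall c, in_span bl (act_right mA c w)) -> in_span bl w.
Proof.
move=> hw; rewrite -[w]swpK; apply: span_map; [exact: fglift_lin | exact: swp_bl |].
apply: ord_left => c; rewrite -swp_act; apply: span_map (hw c); [exact: fglift_lin | exact: swp_bl].
Qed.

End ORD.


Lemma In_mem (T : eqType) (x : T) l : List.In x l -> x \in l.
Proof. elim: l => [//|y l IH] /= [->|h]; rewrite inE ?eqxx //; by rewrite IH ?orbT. Qed.

Section Main.
Variables (K : fieldType) (A B : lmodType K) (mA : A -> A -> A) (mB : B -> B -> B)
  (s t : B -> A -> A).
Hypotheses (hA : is_algebra mA) (hB : is_algebra mB) (hs : mult_hom mB mA s)
  (ht : mult_antihom mB mA t).
Local Notation FA := {freeg (A * A)%type / K}.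
Local Notation bl := (@bilin_rel K A A).
Local Notation bal := (bal_rel s t).
Local Notation "u =o v" := (eqm bl u v) (at level 70).
Local Notation "u =b v" := (eqm bal u v) (at level 70).

Lemma mA_linl c : is_linear (fun a => mA a c).
Proof. by case: hA. Qed.
Lemma mA_linr a : is_linear (mA a).
Proof. by case: hA. Qed.
Lemma mB_linl c : is_linear (fun a => mB a c).
Proof. by case: hB. Qed.
Lemma mB_linr a : is_linear (mB a).
Proof. by case: hB. Qed.
Lemma mB_assoc a b c : mB a (mB b c) = mB (mB a b) c.
Proof. by case: hB. Qed.
Lemma s_lin x : is_linear (s x).
Proof. by case: hs => h _ _; case: (h x) => [[]]. Qed.
Lemma t_lin x : is_linear (t x).
Proof. by case: ht => h _ _; case: (h x) => [[]]. Qed.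
Lemma s_mul x a b : s x (mA a b) = mA (s x a) b.
Proof. by case: hs => h _ _; case: (h x) => [[]]. Qed.
Lemma t_mul x a b : t x (mA a b) = mA (t x a) b.
Proof. by case: ht => h _ _; case: (h x) => [[]]. Qed.
Lemma s_hom x y a : s (mB x y) a = s x (s y a).
Proof. by case: hs. Qed.
Lemma t_hom x y a : t (mB x y) a = t y (t x a).
Proof. by case: ht. Qed.
Lemma s_linx a : is_linear (fun x => s x a).
Proof. by case: hs => _ h _ k x y; apply: h. Qed.
Lemma t_linx a : is_linear (fun x => t x a).
Proof. by case: ht => _ h _ k x y; apply: h. Qed.

Lemma bl_bal w : bl w -> in_span bal w.
Proof. by move=> h; apply: span_gen; left. Qed.
Lemma o_b u v : u =o v -> u =b v.
Proof. by apply: eqm_mono => w h; apply: bl_bal. Qed.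
Lemma bal_sw x a b : << (s x a, b) >> =b << (a, t x b) >>.
Proof. by apply: eqm_gen; right; exists x, a, b. Qed.

Lemma act_left_sum c (l : seq (K * (A * A))) :
  act_left mA c (\sum_(p <- l) p.1 *: << p.2 >>) = \sum_(p <- l) p.1 *: << (mA p.2.1 c, p.2.2) >>.
Proof. by rewrite /act_left fglift_sum. Qed.
Lemma act_right_sum c (l : seq (K * (A * A))) :
  act_right mA c (\sum_(p <- l) p.1 *: << p.2 >>) = \sum_(p <- l) p.1 *: << (p.2.1, mA p.2.2 c) >>.
Proof. by rewrite /act_right fglift_sum. Qed.

Lemma case1 : right_local_units mA -> tensor_nondegenerate mA s t.
Proof.
move=> hu; split=> w hw; have [l El] := free_repr w.
- have [e he] := hu [seq p.2.1 | p <- l]; have := hw e; rewrite El act_left_sum.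
  congr in_span; apply: eq_big_seq => p pl; rewrite he; last by apply: map_f.
  by case: p pl => k [].
- have [e he] := hu [seq p.2.2 | p <- l]; have := hw e; rewrite El act_right_sum.
  congr in_span; apply: eq_big_seq => p pl; rewrite he; last by apply: map_f.
  by case: p pl => k [].
Qed.


Definition rmod (r : (A -> B) * (B -> A)) :=
  [/\ is_linear r.1, is_linear r.2,
      forall x a, r.1 (t x a) = mB (r.1 a) x &
      forall x b, r.2 (mB b x) = t x (r.2 b)].
Definition lmod (r : (A -> B) * (B -> A)) :=
  [/\ is_linear r.1, is_linear r.2,
      forall x a, r.1 (s x a) = mB x (r.1 a) &
      forall x b, r.2 (mB x b) = s x (r.2 b)].

Definition Theta (r r' : (A -> B) * (B -> A)) (u : {freeg (B * B)%type / K}) : FA :=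
  fglift (fun q : B * B => << (r'.2 q.2, r.2 q.1) >>) u.

Lemma Theta_firm r r' u : rmod r -> lmod r' -> in_span (firm_rel mB) u -> in_span bal (Theta r r' u).
Proof.
move=> [r1 r2 r3 r4] [r'1 r'2 r'3 r'4]; apply: span_map; first exact: fglift_lin.
move=> v [hv|[x [y [z ->]]]].
- apply: (@bl_kill K B B FA bal (fun q1 q2 => << (r'.2 q2, r.2 q1) >>)) hv => /=.
  + by move=> x x' y; rewrite (linD r2); apply: o_b; apply: bl_D2.
  + by move=> x y y'; rewrite (linD r'2); apply: o_b; apply: bl_D1.
  + by move=> k x y; rewrite (linZ r2); apply: o_b; apply: bl_Z2.
  + by move=> k x y; rewrite (linZ r'2); apply: o_b; apply: bl_Z1.
- rewrite /Theta (linB (fglift_lin _)) !fgliftU /= r4 r'4.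
  rewrite -opprB; apply: spanN; apply: span_gen; right; by exists y, (r'.2 z), (r.2 x).
Qed.

Lemma recon (l : seq (K * (A * A))) (R L : seq ((A -> B) * (B -> A))) :
  (forall r, List.In r R -> rmod r) -> (forall r, List.In r L -> lmod r) ->
  (forall p, p \in l -> \sum_(r <- R) r.2 (r.1 p.2.2) = p.2.2) ->
  (forall p, p \in l -> \sum_(r <- L) r.2 (r.1 p.2.1) = p.2.1) ->
  (forall r r', List.In r R -> List.In r' L ->
     in_span (firm_rel mB) (\sum_(p <- l) p.1 *: << (r.1 p.2.2, r'.1 p.2.1) >>)) ->
  in_span bal (\sum_(p <- l) p.1 *: << p.2 >>).
Proof.
move=> hR hL eR eL hu.
have S : in_span bal (\sum_(r <- R) \sum_(r' <- L)
            Theta r r' (\sum_(p <- l) p.1 *: << (r.1 p.2.2, r'.1 p.2.1) >>)).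
  apply: span_sum => r hr; apply: span_sum => r' hr'.
  by apply: Theta_firm; [apply: hR | apply: hL | apply: hu].
apply: eqm_span S.
have -> : \sum_(r <- R) \sum_(r' <- L)
            Theta r r' (\sum_(p <- l) p.1 *: << (r.1 p.2.2, r'.1 p.2.1) >>) =
   \sum_(r <- R) \sum_(r' <- L) \sum_(p <- l) p.1 *: << (r'.2 (r'.1 p.2.1), r.2 (r.1 p.2.2)) >>.
  by apply: eq_bigr => r _; apply: eq_bigr => r' _; rewrite /Theta fglift_sumG.
rewrite (eq_bigr (fun r => \sum_(p <- l) \sum_(r' <- L) p.1 *: << (r'.2 (r'.1 p.2.1), r.2 (r.1 p.2.2)) >>)); last by move=> r _; exact: exchange_big.
rewrite exchange_big /=.
apply: eqm_sum => p /In_mem pl.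
under [X in eqm _ _ X]eq_bigr do rewrite -scaler_sumr.
rewrite -scaler_sumr; apply: eqm_scale.
have e1 := eR _ pl; have e2 := eL _ pl; case: p pl e1 e2 => k [a b] pl /= e1 e2.
rewrite -{1}e1 -{1}e2.
apply: o_b; apply: eqm_trans (bl_sum2 _ _ _) _; apply: eqm_sum => r _.
apply: eqm_trans (bl_sum1 _ _ _) _; apply: eqm_refl.
Qed.


Lemma case3 : right_nondegenerate mA -> firm mB -> left_locally_projective mB s ->
  right_locally_projective mB t -> tensor_nondegenerate mA s t.
Proof.
move=> hnd [_ hfirm] lp rp.
have recon' : forall w, (forall r r', rmod r -> lmod r' ->
    mu mB (fglift (fun p : A * A => << (r.1 p.2, r'.1 p.1) >>) w) = 0) -> in_span bal w.
  move=> w hw; have [l El] := free_repr w.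
  have [R [hR eR]] := rp [seq p.2.2 | p <- l].
  have [L [hL eL]] := lp [seq p.2.1 | p <- l].
  rewrite El; apply: (recon (R := R) (L := L)) => //.
  - by move=> p pl; apply: eR; apply: map_f.
  - by move=> p pl; apply: eL; apply: map_f.
  move=> r r' hr hr'; apply: hfirm; have := hw r r' (hR _ hr) (hL _ hr').
  by rewrite El fglift_sumG.
have s_lx := s_linx; have t_lx := t_linx.
split=> w hw; apply: recon' => r r' [r1 r2 r3 r4] [r'1 r'2 r'3 r'4].
- pose Psi := fglift (fun p : A * A => s (r.1 p.2) p.1).
  have comp c : Psi (act_left mA c w) = mA (Psi w) c.
    have [l ->] := free_repr w; rewrite act_left_sum /Psi fglift_sumG fglift_sum.
    rewrite (lin_sum _ _ (mA_linl c)); apply: eq_bigr => p _.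
    by rewrite (linZ (mA_linl c)) s_mul.
  have kb v : bal v -> Psi v = 0.
    move=> [hv|[x [a [b ->]]]].
    + apply: (bl_kill0 (g := fun a b => s (r.1 b) a)) hv => *.
      * exact: (linD (s_lin _)).
      * by rewrite (linD r1) (linD (s_linx _)).
      * exact: (linZ (s_lin _)).
      * by rewrite (linZ r1) (linZ (s_linx _)).
    + by rewrite /Psi (linB (fglift_lin _)) !fgliftU /= r3 s_hom subrr.
  have P0 : Psi w = 0.
    apply: hnd => c; rewrite -comp; apply: kill0 (hw c) => //; exact: fglift_lin.
  rewrite /mu fglift_comp (fglift_ext (g := fun p => r'.1 (s (r.1 p.2) p.1))).
    by rewrite -fglift_post // -/Psi P0 (lin0 r'1).
  by move=> p; rewrite fgliftU /= r'3.
- pose Psi := fglift (fun p : A * A => t (r'.1 p.1) p.2).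
  have comp c : Psi (act_right mA c w) = mA (Psi w) c.
    have [l ->] := free_repr w; rewrite act_right_sum /Psi fglift_sumG fglift_sum.
    rewrite (lin_sum _ _ (mA_linl c)); apply: eq_bigr => p _.
    by rewrite (linZ (mA_linl c)) t_mul.
  have kb v : bal v -> Psi v = 0.
    move=> [hv|[x [a [b ->]]]].
    + apply: (bl_kill0 (g := fun a b => t (r'.1 a) b)) hv => *.
      * by rewrite (linD r'1) (linD (t_linx _)).
      * exact: (linD (t_lin _)).
      * by rewrite (linZ r'1) (linZ (t_linx _)).
      * exact: (linZ (t_lin _)).
    + by rewrite /Psi (linB (fglift_lin _)) !fgliftU /= r'3 t_hom subrr.
  have P0 : Psi w = 0.
    apply: hnd => c; rewrite -comp; apply: kill0 (hw c) => //; exact: fglift_lin.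
  rewrite /mu fglift_comp (fglift_ext (g := fun p => r.1 (t (r'.1 p.1) p.2))).
    by rewrite -fglift_post // -/Psi P0 (lin0 r1).
  by move=> p; rewrite fgliftU /= r3.
Qed.


Local Notation FB := {freeg (B * B)%type / K}.
Local Notation blB := (@bilin_rel K B B).
Local Notation "u =B v" := (eqm blB u v) (at level 70).

Definition R1 (x : B) (u : FB) : FB := fglift (fun q : B * B => << (mB q.1 x, q.2) >>) u.
Definition R2 (z : B) (u : FB) : FB := fglift (fun q : B * B => << (q.1, mB z q.2) >>) u.

Lemma mulT_R2 z u e : mulT mB (R2 z u) e = mulT mB u (lmul_1x mB z e).
Proof.
have [l ->] := free_repr u; have [l' ->] := free_repr e.
rewrite /mulT /R2 /lmul_1x !fglift_sum fglift_sumG; apply: eq_bigr => p _; congr (_ *: _).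
rewrite !fglift_sum fglift_sumG; apply: eq_bigr => q _ /=; by rewrite mB_assoc.
Qed.

Lemma mulT_R1 x u e : mulT mB (R1 x u) e = mulT mB u (lmul_x1 mB x e).
Proof.
have [l ->] := free_repr u; have [l' ->] := free_repr e.
rewrite /mulT /R1 /lmul_x1 !fglift_sum fglift_sumG; apply: eq_bigr => p _; congr (_ *: _).
rewrite !fglift_sum fglift_sumG; apply: eq_bigr => q _ /=; by rewrite mB_assoc.
Qed.

Lemma lmul_comm x z e : lmul_x1 mB x (lmul_1x mB z e) = lmul_1x mB z (lmul_x1 mB x e).
Proof.
have [l ->] := free_repr e; rewrite /lmul_x1 /lmul_1x !fglift_sum !fglift_sumG.
by apply: eq_bigr.
Qed.

Lemma lmul_1x_comp x y e : lmul_1x mB x (lmul_1x mB y e) = lmul_1x mB (mB y x) e.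
Proof.
have [l ->] := free_repr e; rewrite /lmul_1x !fglift_sum !fglift_sumG.
by apply: eq_bigr => q _ /=; rewrite mB_assoc.
Qed.

Lemma mulT_gen u p q : mulT mB u << (p, q) >> = fglift (fun r : B * B => << (mB r.1 p, mB q r.2) >>) u.
Proof. by rewrite /mulT; apply: fglift_ext => r; rewrite fgliftU. Qed.

Definition Om (a b : A) (u : FB) : FA := fglift (fun q : B * B => << (s q.1 a, t q.2 b) >>) u.

Lemma Om_bl a b v : blB v -> in_span bl (Om a b v).
Proof.
apply: (bl_kill (g := fun e f => << (s e a, t f b) >>)) => *.
- by rewrite (linD (s_linx a)); apply: bl_D1.
- by rewrite (linD (t_linx b)); apply: bl_D2.
- by rewrite (linZ (s_linx a)); apply: bl_Z1.
- by rewrite (linZ (t_linx b)); apply: bl_Z2.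
Qed.

Lemma Om_eqB a b u u' : u =B u' -> Om a b u =o Om a b u'.
Proof. by apply: eqm_map; [exact: fglift_lin | exact: Om_bl]. Qed.

Lemma Om_a k a a' b u : Om (k *: a + a') b u =o k *: Om a b u + Om a' b u.
Proof.
have [l ->] := free_repr u; rewrite /Om !fglift_sum scaler_sumr -big_split.
apply: eqm_sum => p _ /=; rewrite (s_lin _); apply: eqm_trans (eqm_scale _ (bl_lin1 _ _ _ _)) _.
by apply: eqm_eq; rewrite scalerDr !scalerA mulrC.
Qed.

Lemma Om_b k a b b' u : Om a (k *: b + b') u =o k *: Om a b u + Om a b' u.
Proof.
have [l ->] := free_repr u; rewrite /Om !fglift_sum scaler_sumr -big_split.
apply: eqm_sum => p _ /=; rewrite (t_lin _); apply: eqm_trans (eqm_scale _ (bl_lin2 _ _ _ _)) _.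
by apply: eqm_eq; rewrite scalerDr !scalerA mulrC.
Qed.

Lemma Om_0a b u : Om 0 b u =o 0.
Proof.
have [l ->] := free_repr u; rewrite /Om !fglift_sum; apply/eqm0; apply: span_sum => p _.
by rewrite (lin0 (s_lin _)); apply: spanZ; apply/eqm0; apply: bl_01.
Qed.

Lemma Om_0b a u : Om a 0 u =o 0.
Proof.
have [l ->] := free_repr u; rewrite /Om !fglift_sum; apply/eqm0; apply: span_sum => p _.
by rewrite (lin0 (t_lin _)); apply: spanZ; apply/eqm0; apply: bl_02.
Qed.

Lemma Om_suma (I : Type) (r : seq I) (G : I -> A) b u :
  Om (\sum_(i <- r) G i) b u =o \sum_(i <- r) Om (G i) b u.
Proof.
elim: r => [|i r IH]; first by rewrite !big_nil; apply: Om_0a.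
rewrite !big_cons; have := Om_a 1 (G i) (\sum_(j <- r) G j) b u; rewrite !scale1r => h.
by apply: eqm_trans h _; apply: eqm_add => //; apply: eqm_refl.
Qed.

Lemma Om_sumb (I : Type) (r : seq I) a (G : I -> A) u :
  Om a (\sum_(i <- r) G i) u =o \sum_(i <- r) Om a (G i) u.
Proof.
elim: r => [|i r IH]; first by rewrite !big_nil; apply: Om_0b.
rewrite !big_cons; have := Om_b 1 a (G i) (\sum_(j <- r) G j) u; rewrite !scale1r => h.
by apply: eqm_trans h _; apply: eqm_add => //; apply: eqm_refl.
Qed.

Lemma Om_R1 x a b u : Om a b (R1 x u) = Om (s x a) b u.
Proof.
rewrite /Om /R1 fglift_comp; apply: fglift_ext => q; by rewrite fgliftU /= s_hom.
Qed.

Lemma Om_R2 z a b u : Om a b (R2 z u) = Om a (t z b) u.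
Proof.
rewrite /Om /R2 fglift_comp; apply: fglift_ext => q; by rewrite fgliftU /= t_hom.
Qed.

Lemma Om_mulgen p q a b u : Om a b (mulT mB u << (p, q) >>) = Om (s p a) (t q b) u.
Proof.
rewrite mulT_gen /Om fglift_comp; apply: fglift_ext => r; by rewrite fgliftU /= s_hom t_hom.
Qed.

Hypotheses (hsi : faithful_idempotent s) (hti : faithful_idempotent t).

Lemma Ds_ex a : exists l : seq (B * A), a = \sum_(p <- l) s p.1 p.2.
Proof. by case: hsi => _; apply. Qed.
Lemma Dt_ex a : exists l : seq (B * A), a = \sum_(p <- l) t p.1 p.2.
Proof. by case: hti => _; apply. Qed.
Definition Ds a := proj1_sig (constructive_indefinite_description _ (Ds_ex a)).
Definition Dt a := proj1_sig (constructive_indefinite_description _ (Dt_ex a)).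
Lemma DsE a : a = \sum_(p <- Ds a) s p.1 p.2.
Proof. by rewrite /Ds; case: constructive_indefinite_description. Qed.
Lemma DtE a : a = \sum_(p <- Dt a) t p.1 p.2.
Proof. by rewrite /Dt; case: constructive_indefinite_description. Qed.

Lemma Om_decomp a b u : Om a b u =o
  \sum_(p <- Ds a) \sum_(q <- Dt b) Om p.2 q.2 (mulT mB u << (p.1, q.1) >>).
Proof.
rewrite {1}(DsE a); apply: eqm_trans (Om_suma _ _ _ _) _; apply: eqm_sum => p _.
rewrite {1}(DtE b); apply: eqm_trans (Om_sumb _ _ _ _) _; apply: eqm_sum => q _.
by rewrite Om_mulgen; apply: eqm_refl.
Qed.

Lemma OMEQ u u' : (forall e, mulT mB u e =B mulT mB u' e) -> forall a b, Om a b u =o Om a b u'.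
Proof.
move=> h a b; apply: eqm_trans (Om_decomp _ _ _) _; apply: eqm_sym.
apply: eqm_trans (Om_decomp _ _ _) _; apply: eqm_sum => p _; apply: eqm_sum => q _.
by apply: Om_eqB; apply: eqm_sym; apply: h.
Qed.

Lemma Om_Za k a b u : Om (k *: a) b u =o k *: Om a b u.
Proof.
have := Om_a k a 0 b u; rewrite addr0 => h; apply: eqm_trans h _.
by have := eqm_add (eqm_refl bl (k *: Om a b u)) (Om_0a b u); rewrite addr0.
Qed.
Lemma Om_Da a a' b u : Om (a + a') b u =o Om a b u + Om a' b u.
Proof. by have := Om_a 1 a a' b u; rewrite !scale1r. Qed.
Lemma Om_Db a b b' u : Om a (b + b') u =o Om a b u + Om a b' u.
Proof. by have := Om_b 1 a b b' u; rewrite !scale1r. Qed.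
Lemma Om_Zb k a b u : Om a (k *: b) u =o k *: Om a b u.
Proof.
have := Om_b k a b 0 u; rewrite addr0 => h; apply: eqm_trans h _.
by have := eqm_add (eqm_refl bl (k *: Om a b u)) (Om_0b a u); rewrite addr0.
Qed.
Lemma Om_N a b u : Om (- a) b u =o - Om a b u.
Proof. by rewrite -!scaleN1r; apply: Om_Za. Qed.

Variable T : FB -> FB.
Hypothesis hT : left_separability_multiplier mB T.

Lemma T_eq u u' : u =B u' -> T u =B T u'.
Proof. case: hT => hl hsp _ _ _; apply: eqm_map => // v hv; apply: hsp; exact: span_gen. Qed.

Lemma hT5 x : exists d, [/\ forall e, eqT (T (lmul_x1 mB x e)) (mulT mB d e),
            forall e, eqT (T (lmul_1x mB x e)) (mulT mB d e) & mu_op mB d = x].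
Proof. by case: hT => _ _ _ _; apply. Qed.
Definition dd x := proj1_sig (constructive_indefinite_description _ (hT5 x)).
Lemma dd_spec x : [/\ forall e, T (lmul_x1 mB x e) =B mulT mB (dd x) e,
            forall e, T (lmul_1x mB x e) =B mulT mB (dd x) e & mu_op mB (dd x) = x].
Proof. by rewrite /dd; case: constructive_indefinite_description. Qed.
Lemma dd1 x e : T (lmul_x1 mB x e) =B mulT mB (dd x) e.
Proof. by case: (dd_spec x). Qed.
Lemma dd2 x e : T (lmul_1x mB x e) =B mulT mB (dd x) e.
Proof. by case: (dd_spec x). Qed.
Lemma dd3 x : mu_op mB (dd x) = x.
Proof. by case: (dd_spec x). Qed.

Lemma KR2R1 x z a b : Om a b (R2 z (dd x)) =o Om a b (R1 x (dd z)).
Proof.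
apply: OMEQ => e; rewrite mulT_R2 mulT_R1; apply: eqm_trans (eqm_sym (dd1 _ _)) _.
by rewrite lmul_comm; apply: dd2.
Qed.

Lemma Kbal z x a b : Om a b (dd (mB z x)) =o Om a b (R2 z (dd x)).
Proof.
apply: OMEQ => e; rewrite mulT_R2; apply: eqm_trans (eqm_sym (dd2 _ _)) _.
by rewrite -lmul_1x_comp; apply: dd2.
Qed.

Lemma WD (D : seq (B * A)) : \sum_(q <- D) s q.1 q.2 = 0 ->
  forall b, \sum_(q <- D) Om q.2 b (dd q.1) =o 0.
Proof.
move=> h0 b.
have E1 : \sum_(q <- D) Om q.2 b (dd q.1) =o
          \sum_(q <- D) \sum_(j <- Dt b) Om (s q.1 q.2) j.2 (dd j.1).
  apply: eqm_sum => q _; rewrite {1}(DtE b); apply: eqm_trans (Om_sumb _ _ _ _) _.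
  apply: eqm_sum => j _; rewrite -Om_R2 -Om_R1; exact: KR2R1.
apply: eqm_trans E1 _; rewrite exchange_big /=; apply/eqm0.
apply: span_sum => j _; apply/eqm0; apply: eqm_trans (eqm_sym (Om_suma _ _ _ _)) _.
by rewrite h0; apply: Om_0a.
Qed.

Definition LiftG a b : FA := \sum_(q <- Ds a) Om q.2 b (dd q.1).
Definition Lift (w : FA) : FA := fglift (fun p : A * A => LiftG p.1 p.2) w.

Lemma LiftG_any (D : seq (B * A)) a b : \sum_(q <- D) s q.1 q.2 = a ->
  LiftG a b =o \sum_(q <- D) Om q.2 b (dd q.1).
Proof.
move=> hD.
have h := WD (D := Ds a ++ [seq (q.1, - q.2) | q <- D]).
rewrite big_cat big_map /= in h.
have h2 : \sum_(q <- Ds a) s q.1 q.2 + \sum_(j <- D) s j.1 (- j.2) = 0.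
  rewrite -DsE; under eq_bigr do rewrite (linN (s_lin _)).
  by rewrite sumrN hD subrr.
have := h h2 b; rewrite big_cat big_map /= => h3.
have h4 : \sum_(j <- D) Om (- j.2) b (dd j.1) =o - \sum_(q <- D) Om q.2 b (dd q.1).
  rewrite -sumrN; apply: eqm_sum => q _; exact: Om_N.
have := eqm_trans (eqm_add (eqm_refl bl (LiftG a b)) (eqm_sym h4)) h3.
by rewrite /eqm /LiftG !subr0.
Qed.

Lemma Lift_gen a b : Lift << (a, b) >> = LiftG a b.
Proof. by rewrite /Lift fgliftU. Qed.

Lemma Lift_bal v : bal v -> in_span bl (Lift v).
Proof.
move=> [hv|[z [a [b ->]]]].
- apply: (bl_kill (g := LiftG)) hv.
  + move=> x x' y; apply: eqm_trans (LiftG_any (D := Ds x ++ Ds x') _ _) _.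
      by rewrite big_cat -!DsE.
    by rewrite big_cat; apply: eqm_refl.
  + move=> x y y'; rewrite /LiftG -big_split; apply: eqm_sum => q _; exact: Om_Db.
  + move=> k x y; apply: eqm_trans (LiftG_any (D := [seq (q.1, k *: q.2) | q <- Ds x]) _ _) _.
      rewrite big_map {2}(DsE x) scaler_sumr; apply: eq_bigr => q _.
      exact: (linZ (s_lin _)).
    rewrite big_map /LiftG scaler_sumr; apply: eqm_sum => q _; exact: Om_Za.
  + move=> k x y; rewrite /LiftG scaler_sumr; apply: eqm_sum => q _; exact: Om_Zb.
- rewrite /Lift (linB (fglift_lin _)) !fgliftU /=.
  change (LiftG (s z a) b =o LiftG a (t z b)).
  apply: eqm_trans (LiftG_any (D := [seq (mB z q.1, q.2) | q <- Ds a]) _ _) _.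
    rewrite big_map {2}(DsE a) (lin_sum _ _ (s_lin z)); apply: eq_bigr => q _.
    exact: s_hom.
  rewrite big_map /LiftG; apply: eqm_sum => q _; rewrite -Om_R2; exact: Kbal.
Qed.

Lemma Om_mu a b d : Om a b d =b << (s (mu_op mB d) a, b) >>.
Proof.
have [l ->] := free_repr d; rewrite /Om /mu_op !fglift_sum.
rewrite (lin_sum _ _ (s_linx a)); apply: eqm_sym.
apply: eqm_trans (o_b (bl_sum1 _ _ _)) _; apply: eqm_sum => p _ /=.
rewrite (linZ (s_linx a)); apply: eqm_trans (o_b (bl_Z1 _ _ _)) _; apply: eqm_scale.
by rewrite s_hom; apply: bal_sw.
Qed.

Lemma LiftG_q a b : LiftG a b =b << (a, b) >>.
Proof.
rewrite /LiftG {2}(DsE a); apply: eqm_trans (eqm_sym (o_b (bl_sum1 _ _ _))).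
apply: eqm_sum => q _; by rewrite -{2}(dd3 q.1); apply: Om_mu.
Qed.

Lemma Lift_q w : Lift w =b w.
Proof.
have [l ->] := free_repr w; rewrite /Lift fglift_sum; apply: eqm_sum => p _.
apply: eqm_scale; case: p => k [] a b; exact: LiftG_q.
Qed.

Lemma Om_actl c a b u : act_left mA c (Om a b u) = Om (mA a c) b u.
Proof. rewrite /act_left /Om fglift_comp; apply: fglift_ext => q; by rewrite fgliftU /= s_mul. Qed.
Lemma Om_actr c a b u : act_right mA c (Om a b u) = Om a (mA b c) u.
Proof. rewrite /act_right /Om fglift_comp; apply: fglift_ext => q; by rewrite fgliftU /= t_mul. Qed.

Lemma Lift_actl c w : Lift (act_left mA c w) =o act_left mA c (Lift w).
Proof.
have [l ->] := free_repr w; rewrite act_left_sum /Lift fglift_sumG fglift_sum.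
rewrite [X in eqm _ _ X](lin_sum _ _ (fglift_lin _)); apply: eqm_sum => p _.
rewrite (linZ (fglift_lin _)); apply: eqm_scale => /=.
apply: eqm_trans (LiftG_any (D := [seq (q.1, mA q.2 c) | q <- Ds p.2.1]) _ _) _.
  rewrite big_map {2}(DsE p.2.1) (lin_sum _ _ (mA_linl c)); apply: eq_bigr => q _.
  exact: s_mul.
rewrite big_map /LiftG (lin_sum _ _ (fglift_lin _)); apply: eqm_eq; apply: eq_bigr => q _.
by rewrite -/(act_left mA c _) Om_actl.
Qed.

Lemma Lift_actr c w : Lift (act_right mA c w) = act_right mA c (Lift w).
Proof.
have [l ->] := free_repr w; rewrite act_right_sum /Lift fglift_sumG fglift_sum.
rewrite [RHS](lin_sum _ _ (fglift_lin _)); apply: eq_bigr => p _.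
rewrite (linZ (fglift_lin _)) /LiftG (lin_sum _ _ (fglift_lin _)); congr (_ *: _).
by apply: eq_bigr => q _; rewrite -/(act_right mA c _) Om_actr.
Qed.

Lemma Lift_span w : in_span bal w -> in_span bl (Lift w).
Proof. by apply: span_map; [exact: fglift_lin | exact: Lift_bal]. Qed.

Lemma case2 : right_nondegenerate mA -> tensor_nondegenerate mA s t.
Proof.
move=> hnd; split=> w hw; apply: (eqm_span (eqm_sym (Lift_q w))); apply: (span_mono bl_bal).
- apply: (ord_left mA_linl hnd) => c; apply: (eqm_span (eqm_sym (Lift_actl c w))).
  exact: Lift_span.
- apply: (ord_right mA_linl hnd) => c; rewrite -Lift_actr; exact: Lift_span.
Qed.

End Main.

Theorem main_generic (K : fieldType) (A B : lmodType K) (mA : A -> A -> A) (mB : B -> B -> B)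
    (s t : B -> A -> A) :
  is_algebra mA -> is_algebra mB ->
  right_idempotent mA -> right_nondegenerate mA ->
  mult_hom mB mA s -> mult_antihom mB mA t ->
  (forall x y a, s x (t y a) = t y (s x a)) ->
  faithful_idempotent s -> faithful_idempotent t ->
  (right_local_units mA \/
   (exists T, left_separability_multiplier mB T) \/
   (firm mB /\ left_locally_projective mB s /\ right_locally_projective mB t)) ->
  tensor_nondegenerate mA s t.
Proof.
move=> hA hB _ hnd hs ht _ hsi hti [h1|[[T hT]|[hf [hl hr]]]].
- by apply: case1.
- exact: (case2 hA hB hs ht hsi hti hT hnd).
- by apply: (case3 (mB := mB)).
Qed.


Unset Implicit Arguments.
Set Strict Implicit.

Theorem lemma2p1 (A B : lmodType Cx) (mA : A -> A -> A) (mB : B -> B -> B)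
    (s t : B -> A -> A) :
  is_algebra mA -> is_algebra mB ->
  right_idempotent mA -> right_nondegenerate mA ->
  mult_hom mB mA s -> mult_antihom mB mA t ->
  (forall x y a, s x (t y a) = t y (s x a)) ->
  faithful_idempotent s -> faithful_idempotent t ->
  (right_local_units mA \/
   (exists T, left_separability_multiplier mB T) \/
   (firm mB /\ left_locally_projective mB s /\ right_locally_projective mB t)) ->
  tensor_nondegenerate mA s t.
Proof. exact: main_generic. Qed.
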